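(* Let $f\ge 2$, $q=p^f$, and let $r=r_0+r_1p+\cdots+r_{f-1}p^{f-1}$ with integers $r_j\ge q$ for all $0\le j\le f-1$ and $r$ divisible by $q-1$. Let $W=\bigotimes_{j=0}^{f-1}V_{r_j}^{\mathrm{Fr}^j}$ and $\overline W = W/\langle\theta_0,\dots,\theta_{f-1}\rangle$. Define linear maps $\iota_0:\bigotimes_{j=0}^{f-1}V_0^{\mathrm{Fr}^j}\to \overline W$ by \[ 1\mapsto \prod_{j}X_j^{r_j}-\prod_j X_j^{r_j-(p-1)}Y_j^{p-1}+\prod_j Y_j^{r_j}, \] and $\iota_{p-1}:\bigotimes_{j=0}^{f-1}V_{p-1}^{\mathrm{Fr}^j}\to\overline W$ on monomials by \[ \prod_j X_j^{p-1-i_j}Y_j^{i_j}\mapsto \prod_j X_j^{r_j-i_j}Y_j^{i_j}\quad\text{if }(i_0,\dots,i_{f-1})\ne(p-1,\dots,p-1),\qquad \prod_j Y_j^{p-1}\mapsto \prod_jY_j^{r_j} \] (with $0\le i_j\le p-1$). Then $\iota_0$ and $\iota_{p-1}$ are $\mathrm{GL}_2(\mathbb{F}_q)$-equivariant and together induce an isomorphism of $\mathrm{GL}_2(\mathbb{F}_q)$-representations \[ \iota_0\oplus\iota_{p-1}:\ \bigotimes_{j=0}^{f-1}V_0^{\mathrm{Fr}^j}\ \oplus\ \bigotimes_{j=0}^{f-1}V_{p-1}^{\mathrm{Fr}^j}\ \xrightarrow{\ \sim\ }\ \overline W . \]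
   Context: $p$ is a prime, $\mathbb{F}_q$ the field with $q=p^f$ elements, and all representations are over $\overline{\mathbb{F}}_p$ (with a fixed embedding $\mathbb{F}_q\hookrightarrow\overline{\mathbb{F}}_p$). For an integer $n\ge0$ and $0\le j\le f-1$, $V_n^{\mathrm{Fr}^j}$ denotes the space of homogeneous polynomials of degree $n$ in variables $X_j,Y_j$, on which $g=\begin{pmatrix}a&b\\c&d\end{pmatrix}\in\mathrm{GL}_2(\mathbb{F}_q)$ acts by $(g\cdot P)(X_j,Y_j)=P(a^{p^j}X_j+c^{p^j}Y_j,\ b^{p^j}X_j+d^{p^j}Y_j)$; tensor products carry the diagonal action, so $\bigotimes_j V_{n_j}^{\mathrm{Fr}^j}$ is identified with polynomials in $X_0,Y_0,\dots,X_{f-1},Y_{f-1}$ homogeneous of degree $n_j$ in $(X_j,Y_j)$ for each $j$. In particular $\bigotimes_j V_0^{\mathrm{Fr}^j}$ is the trivial representation. For $j\in\mathbb{Z}/f\mathbb{Z}$, $\theta_j=X_jY_{j-1}^p-Y_jX_{j-1}^p$, and $\langle\theta_0,\dots,\theta_{f-1}\rangle$ denotes the subrepresentation of $W$ consisting of elements of $W$ lying in the ideal generated by $\theta_0,\dots,\theta_{f-1}$ in the polynomial ring. *)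

(* Defs.v *)
From HB Require Import structures.
From mathcomp Require Import all_boot all_order all_algebra.
From mathcomp Require Import mpoly.

Set Implicit Arguments.
Unset Strict Implicit.
Unset Printing Implicit Defensive.

Import GRing.Theory.
Local Open Scope ring_scope.

Section SerreWeightDefs.
Variables (F : fieldType) (f : nat).

(* The polynomial ring in X_0,Y_0,...,X_{f-1},Y_{f-1}: variable X_j is index
   j and Y_j is index f + j of 'I_(f + f). *)
Notation Pol := {mpoly F[f + f]}.

Definition Xv (j : 'I_f) : 'I_(f + f) := lshift f j.
Definition Yv (j : 'I_f) : 'I_(f + f) := rshift f j.

Lemma prevj_lt (j : 'I_f) : ((j + f.-1) %% f < f)%N.
Proof. by apply: ltn_pmod; apply: leq_ltn_trans (leq0n j) (ltn_ord j). Qed.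

(* j - 1 in Z/fZ *)
Definition prevj (j : 'I_f) : 'I_f := Ordinal (prevj_lt j).

Definition theta (p : nat) (j : 'I_f) : Pol :=
  'X_(Xv j) * 'X_(Yv (prevj j)) ^+ p - 'X_(Yv j) * 'X_(Xv (prevj j)) ^+ p.

Definition in_theta_ideal (p : nat) (P : Pol) : Prop :=
  exists c : 'I_f -> Pol, P = \sum_(j < f) c j * theta p j.

(* P lies in (tensor_j V_{d_j}^{Fr^j}): homogeneous of degree d j in (X_j,Y_j)
   for every j. *)
Definition multihomog (d : 'I_f -> nat) (P : Pol) : Prop :=
  forall m, m \in msupp P -> forall j : 'I_f, (m (Xv j) + m (Yv j))%N = d j.

Definition gl_subst (p : nat) (g : 'M[F]_2) (i : 'I_(f + f)) : Pol :=
  match split i with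
  | inl j => (g 0 0 ^+ (p ^ j)) *: 'X_(Xv j) + (g 1 0 ^+ (p ^ j)) *: 'X_(Yv j)
  | inr j => (g 0 1 ^+ (p ^ j)) *: 'X_(Xv j) + (g 1 1 ^+ (p ^ j)) *: 'X_(Yv j)
  end.

Definition glact (p : nat) (g : 'M[F]_2) (P : Pol) : Pol :=
  P \mPo [tuple gl_subst p g i | i < f + f].

(* g is (the image in M_2(F) of) an element of GL_2(F_q), F_q = {x | x^q = x} *)
Definition inGL2Fq (q : nat) (g : 'M[F]_2) : bool :=
  [forall i, forall j, g i j ^+ q == g i j] && (g \in unitmx).

Definition iota0 (p : nat) (r : 'I_f -> nat) : Pol :=
  \prod_(j < f) 'X_(Xv j) ^+ r j
  - \prod_(j < f) ('X_(Xv j) ^+ (r j - p.-1) * 'X_(Yv j) ^+ p.-1)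
  + \prod_(j < f) 'X_(Yv j) ^+ r j.

(* image of the monomial prod_j X_j^{p-1-i_j} Y_j^{i_j}, where i_j = m (Yv j) *)
Definition iota_mon (p : nat) (r : 'I_f -> nat) (m : 'X_{1..f + f}) : Pol :=
  if [forall j : 'I_f, m (Yv j) == p.-1] then \prod_(j < f) 'X_(Yv j) ^+ r j
  else \prod_(j < f) ('X_(Xv j) ^+ (r j - m (Yv j)) * 'X_(Yv j) ^+ m (Yv j)).

(* linear extension of iota_{p-1} (meaningful on multihomog (fun _ => p-1)) *)
Definition iotap1 (p : nat) (r : 'I_f -> nat) (P : Pol) : Pol :=
  \sum_(m <- msupp P) P@_m *: iota_mon p r m.

End SerreWeightDefs.

(* Main.v *)
Require Import Defs.
From HB Require Import structures.
From mathcomp Require Import all_boot all_order all_algebra all_field.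
From mathcomp Require Import mpoly.
Import GRing.Theory.
Local Open Scope ring_scope.

Set Implicit Arguments.
Unset Strict Implicit.
Unset Printing Implicit Defensive.

Section Mon.
Variables (F : fieldType) (f p : nat).
Local Notation Pol := {mpoly F[f + f]}.

Definition mon (a b : 'I_f -> nat) : 'X_{1..f + f} :=
  [multinom (match split i with inl j => a j | inr j => b j end) | i < f + f].

Lemma monX a b j : mon a b (Xv j) = a j.
Proof. by rewrite mnmE /Xv (unsplitK (inl _ j)). Qed.

Lemma monY a b j : mon a b (Yv j) = b j.
Proof. by rewrite mnmE /Yv (unsplitK (inr _ j)). Qed.

Lemma mon_eta (m : 'X_{1..f + f}) :
  m = mon (fun j => m (Xv j)) (fun j => m (Yv j)).
Proof.
apply/mnmP => i; rewrite mnmE -[in LHS](splitK i).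
by case: (split i).
Qed.

Lemma mpolyX_mon a b : 'X_[mon a b] =
  \prod_(j < f) ('X_(Xv j) ^+ a j * 'X_(Yv j) ^+ b j) :> Pol.
Proof.
rewrite mpolyXE_id big_split_ord /= big_split /=.
by congr (_ * _); apply: eq_bigr => j _; rewrite ?monX ?monY.
Qed.

Definition vv (x y : F) (i : 'I_(f + f)) : F :=
  match split i with inl j => x ^+ (p ^ j) | inr j => y ^+ (p ^ j) end.

Definition ev x y (P : Pol) : F := P.@[vv x y].

Lemma ev_mon x y a b : ev x y 'X_[mon a b] =
  x ^+ (\sum_(j < f) a j * p ^ j) * y ^+ (\sum_(j < f) b j * p ^ j).
Proof.
rewrite /ev mevalX big_split_ord /= -!prodrXr.
congr (_ * _); apply: eq_bigr => j _;
  rewrite /vv ?monX ?monY ?(unsplitK (inl _ j)) ?(unsplitK (inr _ j)) /=;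
  by rewrite mulnC exprM.
Qed.

Lemma ev_X x y (m : 'X_{1..f + f}) : ev x y 'X_[m] =
  x ^+ (\sum_(j < f) m (Xv j) * p ^ j) * y ^+ (\sum_(j < f) m (Yv j) * p ^ j).
Proof. by rewrite {1}[m]mon_eta ev_mon. Qed.


Lemma eqXX (i j : 'I_f) : (Xv i == Xv j) = (i == j). Proof. exact: eq_lshift. Qed.
Lemma eqYY (i j : 'I_f) : (Yv i == Yv j) = (i == j). Proof. exact: eq_rshift. Qed.
Lemma eqXY (i j : 'I_f) : (Xv i == Yv j) = false. Proof. exact: eq_lrshift. Qed.
Lemma eqYX (i j : 'I_f) : (Yv i == Xv j) = false. Proof. exact: eq_rlshift. Qed.

Local Notation mh := (@multihomog F f).
Implicit Types (d : 'I_f -> nat).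

Lemma mh_ext (d1 d2 : 'I_f -> nat) (P : Pol) : (forall j, d1 j = d2 j) -> mh d1 P -> mh d2 P.
Proof. by move=> e h m hm j; rewrite -e h. Qed.

Lemma mh0 d : mh d (0 : Pol).
Proof. by move=> m; rewrite msupp0. Qed.

Lemma mhD d (P Q : Pol) : mh d P -> mh d Q -> mh d (P + Q).
Proof.
move=> hP hQ m /msuppD_le; rewrite mem_cat => /orP [/hP|/hQ] //.
Qed.

Lemma mhN d (P : Pol) : mh d P -> mh d (- P).
Proof. by move=> hP m; rewrite (perm_mem (msuppN P)) => /hP. Qed.

Lemma mhB d (P Q : Pol) : mh d P -> mh d Q -> mh d (P - Q).
Proof. by move=> hP hQ; apply: mhD => //; apply: mhN. Qed.

Lemma mhZ d c (P : Pol) : mh d P -> mh d (c *: P).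
Proof. by move=> hP m /msuppZ_le /hP. Qed.

Lemma mh_sum d (I : eqType) (s : seq I) (G : I -> Pol) :
  (forall i, i \in s -> mh d (G i)) -> mh d (\sum_(i <- s) G i).
Proof.
elim: s => [|i s ih] h; first by rewrite big_nil; apply: mh0.
rewrite big_cons; apply: mhD; first by apply: h; rewrite inE eqxx.
by apply: ih => k hk; apply: h; rewrite inE hk orbT.
Qed.

Lemma mhX d (m : 'X_{1..f + f}) :
  (forall j, (m (Xv j) + m (Yv j))%N = d j) -> mh d 'X_[m].
Proof. by move=> h m'; rewrite msuppX inE => /eqP ->. Qed.

Lemma mhM (d1 d2 : 'I_f -> nat) (P Q : Pol) : mh d1 P -> mh d2 Q ->
  mh (fun j => d1 j + d2 j)%N (P * Q).
Proof.
move=> hP hQ m /msuppM_le /allpairsP [[m1 m2] /= [h1 h2 ->]] j.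
by rewrite !mnmDE addnACA hP // hQ.
Qed.

Lemma mh1 : mh (fun _ => 0%N) (1 : Pol).
Proof. by rewrite -mpolyX0; apply: mhX => j; rewrite !mnm0E. Qed.

Lemma mhXn d k (P : Pol) : mh d P -> mh (fun j => k * d j)%N (P ^+ k).
Proof.
move=> hP; elim: k => [|k ih].
  by rewrite expr0; apply: (mh_ext _ mh1) => j; rewrite mul0n.
rewrite exprS; apply: (mh_ext _ (mhM hP ih)) => j; by rewrite mulSn.
Qed.

Lemma mh_prod (I : eqType) (s : seq I) (d : I -> 'I_f -> nat) (G : I -> Pol) :
  (forall i, i \in s -> mh (d i) (G i)) ->
  mh (fun j => \sum_(i <- s) d i j)%N (\prod_(i <- s) G i).
Proof.
elim: s => [|i s ih] h.
  by rewrite big_nil; apply: (mh_ext _ mh1) => j; rewrite big_nil.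
rewrite big_cons.
have hs : forall k, k \in s -> mh (d k) (G k).
  by move=> k hk; apply: h; rewrite inE hk orbT.
have := mhM (h i (mem_head _ _)) (ih hs).
by apply: mh_ext => j; rewrite big_cons.
Qed.

Definition blk (i : 'I_(f + f)) (j : 'I_f) : nat :=
  match split i with inl j' => (j' == j) : nat | inr j' => (j' == j) : nat end.

Lemma mh_subst (g : 'M[F]_2) (i : 'I_(f + f)) : mh (blk i) (gl_subst p g i).
Proof.
rewrite /gl_subst /blk; case: (split i) => j';
  (apply: mhD; apply: mhZ; apply: mhX => j;
   by rewrite !mnm1E ?eqXX ?eqYY ?eqXY ?eqYX ?addn0 ?add0n).
Qed.

Lemma mh_glact d (g : 'M[F]_2) (P : Pol) : mh d P -> mh d (glact p g P).
Proof.
move=> hP; rewrite /glact comp_mpolyE; apply: mh_sum => m hm; apply: mhZ.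
have H := @mh_prod _ (index_enum 'I_(f + f))
  (fun i j => m i * blk i j)%N
  (fun i => tnth [tuple gl_subst p g i | i < f + f] i ^+ m i).
apply: (mh_ext _ (H _)); last first.
  by move=> i _; rewrite tnth_mktuple; apply: mhXn; apply: mh_subst.
move=> j; rewrite -(hP m hm j) big_split_ord /=.
rewrite /blk.
congr (_ + _)%N.
  rewrite (bigD1 j) //= (unsplitK (inl _ j)) eqxx muln1 big1 ?addn0 // => k hk.
  by rewrite (unsplitK (inl _ k)) (negbTE hk) muln0.
rewrite (bigD1 j) //= (unsplitK (inr _ j)) eqxx muln1 big1 ?addn0 // => k hk.
by rewrite (unsplitK (inr _ k)) (negbTE hk) muln0.
Qed.


Local Notation I := (@in_theta_ideal F f p).

Lemma ideal0 : I 0.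
Proof. by exists (fun _ => 0); rewrite big1 // => j _; rewrite mul0r. Qed.

Lemma idealD P Q : I P -> I Q -> I (P + Q).
Proof.
move=> [c ->] [c' ->]; exists (fun j => c j + c' j).
by rewrite -big_split /=; apply: eq_bigr => j _; rewrite mulrDl.
Qed.

Lemma idealM (R P : Pol) : I P -> I (R * P).
Proof.
move=> [c ->]; exists (fun j => R * c j).
by rewrite mulr_sumr; apply: eq_bigr => j _; rewrite mulrA.
Qed.

Lemma idealN P : I P -> I (- P).
Proof. by move=> h; rewrite -mulN1r; apply: idealM. Qed.

Lemma idealB P Q : I P -> I Q -> I (P - Q).
Proof. by move=> hP hQ; apply: idealD => //; apply: idealN. Qed.

Lemma idealZ c P : I P -> I (c *: P).
Proof. by move=> h; rewrite -mul_mpolyC; apply: idealM. Qed.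

Lemma ideal_sum (J : Type) (s : seq J) (G : J -> Pol) :
  (forall i, I (G i)) -> I (\sum_(i <- s) G i).
Proof.
move=> h; elim: s => [|i s ih]; first by rewrite big_nil; apply: ideal0.
by rewrite big_cons; apply: idealD.
Qed.

Lemma ideal_theta (R : Pol) (j : 'I_f) : I (R * theta F p j).
Proof.
exists (fun k => if k == j then R else 0).
rewrite (bigD1 j) //= eqxx big1 ?addr0 // => k /negbTE ->; by rewrite mul0r.
Qed.

End Mon.

Section CharP.
Variables (F : fieldType) (f p : nat).
Hypothesis pr : prime p.
Hypothesis chp : p \in [pchar F].
Local Notation Pol := {mpoly F[f + f]}.

Lemma frobD (x y : F) k : (x + y) ^+ (p ^ k) = x ^+ (p ^ k) + y ^+ (p ^ k).
Proof.
apply: exprDn_pchar; rewrite pnatX (pnatE _ pr) chp //.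
Qed.

Lemma ev_glact (g : 'M[F]_2) (P : Pol) x y :
  ev p x y (glact p g P) = ev p (g 0 0 * x + g 1 0 * y) (g 0 1 * x + g 1 1 * y) P.
Proof.
rewrite /ev /glact comp_mpoly_meval; apply: meval_eq => i.
rewrite tnth_mktuple /gl_subst /vv; case: (split i) => j;
by rewrite mevalD !mevalZ !mevalXU /vv (unsplitK (inl _ j)) (unsplitK (inr _ j))
   frobD !exprMn.
Qed.

End CharP.
Require Import Defs.
From HB Require Import structures.
From mathcomp Require Import all_boot all_order all_algebra all_field.
From mathcomp Require Import mpoly.
From mathcomp Require Import zify.
Import GRing.Theory.
Local Open Scope ring_scope.
Set Implicit Arguments.
Unset Strict Implicit.
Unset Printing Implicit Defensive.

Section Fq.
Variables (F : fieldType) (f p : nat).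
Hypothesis pr : prime p.
Hypothesis fpos : (0 < f)%N.
Local Notation Pol := {mpoly F[f + f]}.
Local Notation q := (p ^ f)%N.

Lemma q_gt1 : (1 < q)%N.
Proof.
have p2 := prime_gt1 pr; case: f fpos => // k _.
by rewrite expnS (leq_trans p2) // leq_pmulr // expn_gt0 (ltnW p2).
Qed.

Lemma fq_step (x : F) k : x ^+ q = x -> (0 < k)%N -> x ^+ (k + q.-1) = x ^+ k.
Proof.
move=> hx; case: k => // k _.
have q1 := q_gt1.
have -> : (k.+1 + q.-1 = k + q)%N by rewrite addSn -addnS prednK // ltnW.
by rewrite exprD hx exprSr.
Qed.

Lemma fq_pow (x : F) e n : x ^+ q = x -> (0 < e)%N -> x ^+ (e + q.-1 * n) = x ^+ e.
Proof.
move=> hx he; elim: n => [|n ih]; first by rewrite muln0 addn0.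
rewrite mulnS addnCA addnC fq_step //.
by rewrite addn_gt0 he.
Qed.

Lemma fq_pow1 (x : F) n : x ^+ q = x -> (0 < n)%N -> x ^+ (q.-1 * n) = x ^+ q.-1.
Proof.
move=> hx; case: n => // n _; rewrite mulnS fq_pow //.
by rewrite -ltnS prednK ?q_gt1 // ltnW // q_gt1.
Qed.

Lemma fq01 (x : F) : x ^+ q = x -> x ^+ q.-1 = (x != 0)%:R.
Proof.
move=> hx; have q1 := q_gt1.
have hq : (0 < q.-1)%N by rewrite -ltnS prednK // ltnW.
have [->|nz] := eqVneq x 0; first by rewrite expr0n; case: (q.-1) hq.
apply: (mulfI nz); rewrite -exprS prednK ?(ltnW q1) // hx /= mulr1 //.
Qed.

Lemma prevj_pow (z : F) (j : 'I_f) :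
  z ^+ q = z -> (z ^+ (p ^ prevj j)) ^+ p = z ^+ (p ^ j).
Proof.
move=> hz; rewrite -exprM -expnSr /prevj /=.
case: j => [[|j] hj] /=.
  rewrite add0n modn_small; last by rewrite ltn_predL.
  by rewrite prednK // hz expn0 expr1.
have -> : (j.+1 + f.-1 = j + f)%N by rewrite addSn -addnS prednK.
by rewrite modnDr modn_small // ltnW.
Qed.

Lemma ev_theta x y (j : 'I_f) : x ^+ q = x -> y ^+ q = y ->
  ev p x y (theta F p j) = 0.
Proof.
move=> hx hy; rewrite /ev /theta rmorphB !rmorphM !rmorphXn /= !mevalXU /vv.
rewrite /Xv /Yv !(unsplitK (inl _ _)) !(unsplitK (inr _ _)) /=.
rewrite !prevj_pow //.
by rewrite mulrC subrr.
Qed.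


Lemma ev_ideal x y (P : Pol) : x ^+ q = x -> y ^+ q = y ->
  in_theta_ideal p P -> ev p x y P = 0.
Proof.
move=> hx hy [c ->]; rewrite /ev raddf_sum /=; apply: big1 => j _.
rewrite rmorphM /=; have := ev_theta j hx hy; rewrite /ev => ->.
by rewrite mulr0.
Qed.

End Fq.

Lemma sum_pm1 p n : (0 < p)%N -> (\sum_(j < n) p.-1 * p ^ j)%N = (p ^ n).-1.
Proof.
move=> p0; elim: n => [|n ih]; first by rewrite big_ord0 expn0.
rewrite big_ord_recr /= ih.
have h1 : (0 < (p ^ n)%N)%N by rewrite expn_gt0 p0.
rewrite expnS; move: h1; set t := (p ^ n)%N => h1; nia.
Qed.

Lemma digits_inj p n (a b : nat -> nat) :
  (forall j, (j < n)%N -> (a j < p)%N) -> (forall j, (j < n)%N -> (b j < p)%N) ->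
  (\sum_(j < n) a j * p ^ j)%N = (\sum_(j < n) b j * p ^ j)%N ->
  forall j, (j < n)%N -> a j = b j.
Proof.
elim: n a b => [|n ih] a b ha hb; first by [].
rewrite !big_ord_recl /= !expn0 !muln1.
have e : forall c : nat -> nat,
    (\sum_(i < n) c (bump 0 i) * p ^ bump 0 i = p * \sum_(i < n) c i.+1 * p ^ i)%N.
  move=> c; rewrite big_distrr /=; apply: eq_bigr => i _.
  by rewrite /bump /= add1n expnS mulnCA.
rewrite !e => hs.
have h0 : a 0%N = b 0%N.
  have := congr1 (modn^~ p) hs.
  rewrite ![(_ + p * _)%N]addnC ![(p * _)%N]mulnC !modnMDl !modn_small //; [exact: hb | exact: ha].
have p0 : (0 < p)%N := leq_ltn_trans (leq0n _) (ha 0%N isT).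
move: hs; rewrite h0 => /addnI /eqP; rewrite eqn_pmul2l // => /eqP hs.
have := ih (fun i => a i.+1) (fun i => b i.+1).
move=> /(_ (fun j hj => ha j.+1 hj) (fun j hj => hb j.+1 hj) hs) H.
by case=> [|j] hj //; apply: H.
Qed.
Require Import Defs.
From HB Require Import structures.
From mathcomp Require Import all_boot all_order all_algebra all_field.
From mathcomp Require Import mpoly zify ring.
Import GRing.Theory.
Local Open Scope ring_scope.
Set Implicit Arguments.
Unset Strict Implicit.
Unset Printing Implicit Defensive.

Section Main.
Variables (F : fieldType) (p f : nat) (r : 'I_f -> nat).
Hypothesis pr : prime p.
Hypothesis fpos : (0 < f)%N.
Hypothesis hr : forall j, (p ^ f <= r j)%N.
Local Notation Pol := {mpoly F[f + f]}.
Local Notation mh := (@multihomog F f).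
Local Notation q := (p ^ f)%N.

Lemma p_gt1 : (1 < p)%N. Proof. exact: prime_gt1. Qed.

Lemma pm1_le_r j : (p.-1 <= r j)%N.
Proof.
apply: leq_trans (hr j); apply: leq_trans (leq_pred _) _.
by rewrite -{1}(expn1 p) leq_pexp2l // ltnW // p_gt1.
Qed.

Definition cst (k : nat) : 'I_f -> nat := fun _ => k.

Lemma iota0E : iota0 F p r =
  'X_[mon r (cst 0)] - 'X_[mon (fun j => r j - p.-1)%N (cst p.-1)]
  + 'X_[mon (cst 0) r].
Proof.
rewrite /iota0 !mpolyX_mon; congr (_ - _ + _); apply: eq_bigr => j _;
by rewrite ?expr0 ?mulr1 ?mul1r.
Qed.

Lemma mh_iota0 : mh r (iota0 F p r).
Proof.
rewrite iota0E; apply: mhD; first apply: mhB; apply: mhX => j;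
by rewrite monX monY /cst ?addn0 ?add0n // subnK // pm1_le_r.
Qed.

Definition allY (m : 'X_{1..f + f}) := [forall j : 'I_f, m (Yv j) == p.-1].

Lemma iota_monE (m : 'X_{1..f + f}) : iota_mon F p r m =
  if allY m then 'X_[mon (cst 0) r]
  else 'X_[mon (fun j => r j - m (Yv j))%N (fun j => m (Yv j))].
Proof.
rewrite /iota_mon /allY mpolyX_mon; case: ifP => _; last first.
  by rewrite mpolyX_mon.
by apply: eq_bigr => j _; rewrite expr0 mul1r.
Qed.

Lemma mh_iota_mon (m : 'X_{1..f + f}) :
  (forall j, (m (Xv j) + m (Yv j))%N = p.-1) -> mh r (iota_mon F p r m).
Proof.
move=> hm; rewrite iota_monE; case: ifP => _; apply: mhX => j;
rewrite monX monY ?add0n // subnK //.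
by apply: leq_trans (pm1_le_r j); rewrite -(hm j) leq_addl.
Qed.

Lemma mh_iotap1 (P : Pol) : mh (cst p.-1) P -> mh r (iotap1 p r P).
Proof.
move=> hP; rewrite /iotap1; apply: mh_sum => m hm; apply: mhZ.
by apply: mh_iota_mon => j; rewrite (hP m hm).
Qed.

Lemma iotap1_seq (P : Pol) (s : seq 'X_{1..f + f}) : uniq s ->
  {subset msupp P <= s} ->
  iotap1 p r P = \sum_(m <- s) P@_m *: iota_mon F p r m.
Proof.
move=> us sub; rewrite (bigID (mem (msupp P))) /=.
rewrite [X in _ + X]big1 ?addr0; last first.
  by move=> m /memN_msupp_eq0 ->; rewrite scale0r.
rewrite -big_filter /iotap1; apply: perm_big.
apply: uniq_perm; rewrite ?msupp_uniq ?filter_uniq // => m.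
rewrite mem_filter; apply/idP/andP => [h|[]//]; split => //; exact: sub.
Qed.

Lemma iotap1D (P Q : Pol) : iotap1 p r (P + Q) = iotap1 p r P + iotap1 p r Q.
Proof.
set s := undup (msupp P ++ msupp Q).
have us : uniq s by apply: undup_uniq.
have sP : {subset msupp P <= s} by move=> m h; rewrite mem_undup mem_cat h.
have sQ : {subset msupp Q <= s} by move=> m h; rewrite mem_undup mem_cat h orbT.
have sPQ : {subset msupp (P + Q) <= s}.
  by move=> m /msuppD_le; rewrite mem_undup.
rewrite (iotap1_seq us sP) (iotap1_seq us sQ) (iotap1_seq us sPQ) -big_split.
by apply: eq_bigr => m _; rewrite mcoeffD scalerDl.
Qed.

Lemma iotap1Z c (P : Pol) : iotap1 p r (c *: P) = c *: iotap1 p r P.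
Proof.
have sub : {subset msupp (c *: P) <= msupp P} by apply: msuppZ_le.
rewrite (iotap1_seq (msupp_uniq P) sub) /iotap1 scaler_sumr.
by apply: eq_bigr => m _; rewrite mcoeffZ scalerA.
Qed.

Lemma iotap1_0 : iotap1 p r (0 : Pol) = 0.
Proof. by rewrite /iotap1 msupp0 big_nil. Qed.

Lemma iotap1X (m : 'X_{1..f + f}) : iotap1 p r ('X_[m] : Pol) = iota_mon F p r m.
Proof. by rewrite /iotap1 msuppX big_seq1 mcoeffX eqxx scale1r. Qed.


Hypothesis hdiv : (q - 1 %| \sum_(j < f) r j * p ^ j)%N.

Local Notation Rs := (\sum_(j < f) r j * p ^ j)%N.
Definition nR := (Rs %/ q.-1)%N.

Lemma RsE : Rs = (q.-1 * nR)%N.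
Proof. by rewrite /nR mulnC divnK // -subn1. Qed.

Lemma q_gt1' : (1 < q)%N. Proof. exact: q_gt1. Qed.

Lemma nR_gt1 : (1 < nR)%N.
Proof.
have q1 := q_gt1'.
have : (q <= Rs)%N.
  rewrite (bigD1 (Ordinal fpos)) //= expn0 muln1.
  exact: leq_trans (hr _) (leq_addr _ _).
rewrite RsE; move: q1; set n := nR; set Q := q; nia.
Qed.

Lemma sum_pm1' : (\sum_(j < f) p.-1 * p ^ j)%N = q.-1.
Proof. by apply: sum_pm1; rewrite ltnW // p_gt1. Qed.

Lemma sum_rm : (\sum_(j < f) (r j - p.-1) * p ^ j)%N = (q.-1 * nR.-1)%N.
Proof.
have h : (\sum_(j < f) (r j - p.-1) * p ^ j + q.-1)%N = (q.-1 * nR)%N.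
  rewrite -RsE -sum_pm1' -big_split /=; apply: eq_bigr => j _.
  by rewrite -mulnDl subnK // pm1_le_r.
have n1 := nR_gt1.
move: h; set X := (\sum_(j < f) _)%N; set Q := q.-1; set n := nR; nia.
Qed.

Definition E (x y : F) := x ^+ q.-1 - x ^+ q.-1 * y ^+ q.-1 + y ^+ q.-1.

Lemma sum0 : (\sum_(j < f) cst 0 j * p ^ j)%N = 0%N.
Proof. by rewrite big1. Qed.

Lemma sumpm : (\sum_(j < f) cst p.-1 j * p ^ j)%N = q.-1.
Proof. exact: sum_pm1'. Qed.

Lemma ev_iota0 x y : x ^+ q = x -> y ^+ q = y -> ev p x y (iota0 F p r) = E x y.
Proof.
move=> hx hy; rewrite iota0E /ev !raddfD ?raddfN ?raddfB /=.
rewrite -!/(ev p x y _) !ev_mon sum0 sumpm sum_rm RsE !expr0 mulr1 mul1r.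
have n1 := nR_gt1.
have n0 : (0 < nR.-1)%N by rewrite -ltnS prednK // ltnW.
rewrite (fq_pow1 pr fpos hx (ltnW n1)) (fq_pow1 pr fpos hx n0).
by rewrite (fq_pow1 pr fpos hy (ltnW n1)).
Qed.

Lemma ev_iota_mon x y (m : 'X_{1..f + f}) : x ^+ q = x -> y ^+ q = y ->
  (forall j, (m (Xv j) + m (Yv j))%N = p.-1) ->
  ev p x y (iota_mon F p r m) = ev p x y 'X_[m].
Proof.
move=> hx hy hm; rewrite iota_monE ev_X; case: ifP => hall.
  have eY : forall j, m (Yv j) = p.-1 by move=> j; apply/eqP; move/forallP: hall.
  have eX : forall j, m (Xv j) = 0%N.
    by move=> j; have := hm j; rewrite eY => /eqP; rewrite -{2}[p.-1]add0n eqn_add2r => /eqP.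
  rewrite ev_mon sum0 RsE.
  have s1 : (\sum_(j < f) m (Xv j) * p ^ j)%N = 0%N.
    by rewrite big1 // => j _; rewrite eX.
  have s2 : (\sum_(j < f) m (Yv j) * p ^ j)%N = q.-1.
    by rewrite -sum_pm1'; apply: eq_bigr => j _; rewrite eY.
  rewrite s1 s2 !expr0 !mul1r (fq_pow1 pr fpos hy (ltnW nR_gt1)) //.
rewrite ev_mon; congr (_ * _).
move/negbT: hall; rewrite negb_forall => /existsP [j0 hj0].
have e : (\sum_(j < f) (r j - m (Yv j)) * p ^ j)%N =
    (\sum_(j < f) m (Xv j) * p ^ j + q.-1 * nR.-1)%N.
  rewrite -sum_rm -big_split /=; apply: eq_bigr => j _; rewrite -mulnDl.
  congr (_ * _)%N; have := hm j; have := pm1_le_r j; lia.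
rewrite e fq_pow //.
rewrite (bigD1 j0) //= ltn_addr // muln_gt0 expn_gt0 (ltnW p_gt1) /= andbT.
have := hm j0; move: hj0; lia.
Qed.

Lemma ev_iotap1 x y (P : Pol) : x ^+ q = x -> y ^+ q = y ->
  mh (cst p.-1) P -> ev p x y (iotap1 p r P) = ev p x y P.
Proof.
move=> hx hy hP; rewrite [in RHS](mpolyE P) /iotap1 /ev !raddf_sum /=.
rewrite big_seq [in RHS]big_seq; apply: eq_bigr => m hm; rewrite !mevalZ; congr (_ * _).
by apply: ev_iota_mon => // j; rewrite (hP m hm j).
Qed.


Local Notation I := (@in_theta_ideal F f p).

Definition Span (w : Pol) := exists (c : F) (P : Pol),
  mh (cst p.-1) P /\ I (w - (c *: iota0 F p r + iotap1 p r P)).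

Lemma span0 : Span 0.
Proof.
exists 0, 0; split; first exact: mh0.
by rewrite iotap1_0 scale0r !addr0 subrr; apply: ideal0.
Qed.

Lemma spanD w1 w2 : Span w1 -> Span w2 -> Span (w1 + w2).
Proof.
move=> [c1 [P1 [h1 i1]]] [c2 [P2 [h2 i2]]]; exists (c1 + c2), (P1 + P2).
split; first exact: mhD.
have -> : w1 + w2 - ((c1 + c2) *: iota0 F p r + iotap1 p r (P1 + P2)) =
  (w1 - (c1 *: iota0 F p r + iotap1 p r P1)) + (w2 - (c2 *: iota0 F p r + iotap1 p r P2)).
  by rewrite iotap1D scalerDl; ring.
exact: idealD.
Qed.

Lemma spanZ a w : Span w -> Span (a *: w).
Proof.
move=> [c [P [h i]]]; exists (a * c), (a *: P); split; first exact: mhZ.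
have -> : a *: w - ((a * c) *: iota0 F p r + iotap1 p r (a *: P)) =
  a *: (w - (c *: iota0 F p r + iotap1 p r P)).
  by rewrite iotap1Z -scalerA -scalerDr -scalerBr.
exact: idealZ.
Qed.

Lemma span_shift w w' : I (w - w') -> Span w' -> Span w.
Proof.
move=> hw [c [P [h i]]]; exists c, P; split => //.
have -> : w - (c *: iota0 F p r + iotap1 p r P) =
  (w - w') + (w' - (c *: iota0 F p r + iotap1 p r P)) by ring.
exact: idealD.
Qed.

Lemma mon_ext (a b a' b' : 'I_f -> nat) : a =1 a' -> b =1 b' -> mon a b = mon a' b'.
Proof.
move=> ea eb; apply/mnmP => i; rewrite !mnmE; case: (split i) => j //.
Qed.

Lemma sum_delta (k : 'I_f) c : (\sum_(i < f) (k == i) * c)%N = c.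
Proof.
rewrite (bigD1 k) //= eqxx mul1n big1 ?addn0 // => i hi.
by rewrite eq_sym (negbTE hi).
Qed.

Lemma prevj_val (j : 'I_f) : val (prevj j) = ((j + f.-1) %% f)%N.
Proof. by []. Qed.


Lemma p_le_r j : (p <= r j)%N.
Proof.
apply: leq_trans (hr j); rewrite -{1}(expn1 p) leq_pexp2l //.
exact: ltnW p_gt1.
Qed.

Definition jkf (j1 : 'I_f) (k : nat) : 'I_f := Ordinal (ltn_pmod (j1 + k) fpos).
Arguments jkf : simpl never.

Lemma jkf_val j1 k : val (jkf j1 k) = ((j1 + k) %% f)%N.
Proof. by []. Qed.

Lemma jkf_step j1 k : prevj (jkf j1 k.+1) = jkf j1 k.
Proof.
apply: val_inj; rewrite prevj_val !jkf_val modnDml.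
have -> : (j1 + k.+1 + f.-1 = j1 + k + f)%N by move: fpos; lia.
by rewrite modnDr.
Qed.

Lemma jkf_all j1 (x : 'I_f) : x = jkf j1 (x + f - j1)%N.
Proof.
apply: val_inj; rewrite jkf_val.
have -> : (j1 + (x + f - j1) = x + f)%N by have := ltn_ord j1; lia.
by rewrite modnDr modn_small.
Qed.

Lemma spanX (m : 'X_{1..f + f}) :
  (forall j, (m (Xv j) + m (Yv j))%N = r j) -> Span 'X_[m].
Proof.
pose S (m : 'X_{1..f + f}) := (\sum_(i < f) m (Yv i))%N.
move=> hm0.
suff H : forall n (m : 'X_{1..f + f}), (S m < n)%N ->
    (forall j, (m (Xv j) + m (Yv j))%N = r j) -> Span 'X_[m].
  exact: (H _ m (ltnSn _) hm0).
have p1 := p_gt1.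
elim=> [//|n ih] {hm0}m hS hm.
case: (pickP (fun j : 'I_f => (0 < m (Xv j))%N && (p <= m (Yv (prevj j)))%N))
  => [j /andP [hx hy] | none].
- set jm := prevj j.
  set u := (U_(Xv j) + U_(Yv jm) *+ p)%MM.
  set u' := (U_(Yv j) + U_(Xv jm) *+ p)%MM.
  have hle : (u <= m)%MM.
    apply/mnm_lepP => i; rewrite mnmDE mulmnE !mnm1E.
    have [<-|ne1] := eqVneq (Xv j) i; first by rewrite eqYX mul0n addn0.
    rewrite add0n.
    by have [<-|ne2] := eqVneq (Yv jm) i; rewrite ?mul1n ?mul0n.
  set m0 := (m - u)%MM.
  have Em : m = (m0 + u)%MM by rewrite submK.
  set m' := (m0 + u')%MM.
  have bd : forall i, (m' (Xv i) + m' (Yv i))%N = r i.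
    move=> i; rewrite -hm Em !mnmDE !mulmnE !mnm1E !eqXX !eqYY !eqXY !eqYX; lia.
  have e1 : S m = (S m0 + p)%N.
    rewrite /S {1}Em -(sum_delta jm p) -big_split /=; apply: eq_bigr => i _.
    by rewrite mnmDE mnmDE mulmnE !mnm1E eqXY eqYY.
  have e2 : S m' = (S m0 + 1)%N.
    rewrite /S /m' -(sum_delta j 1) -big_split /=; apply: eq_bigr => i _.
    by rewrite mnmDE mnmDE mulmnE !mnm1E eqXY eqYY; lia.
  have diff : 'X_[m] - 'X_[m'] = 'X_[m0] * theta F p j.
    by rewrite /theta {1}Em /m' !mpolyXD -!mpolyXn -mulrBr.
  apply: (span_shift _ (ih m' _ bd)); first by rewrite diff; apply: ideal_theta.
  by move: hS; rewrite e1 e2; lia.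
- case: (boolP [forall j, m (Yv j) < p]%N) => [/forallP small | /forallPn [j1 big]].
  + have sm : forall j, (m (Yv j) <= p.-1)%N.
      by move=> j; have := small j; lia.
    case: (boolP (allY m)) => hall.
    * exists (-1), ('X_[mon (cst p.-1) (cst 0)] + 'X_[mon (cst 0) (cst p.-1)]).
      split.
        by apply: mhD; apply: mhX => j; rewrite monX monY /cst ?addn0 ?add0n.
      rewrite iotap1D !iotap1X !iota_monE.
      have a1 : allY (mon (cst p.-1) (cst 0)) = false.
        apply/negbTE/forallPn; exists (Ordinal fpos); rewrite monY /cst.
        by move: p1; case: (p) => [|[|]].
      have a2 : allY (mon (cst 0) (cst p.-1)) by apply/forallP => j; rewrite monY.
      rewrite a1 a2 iota0E.
      have e1 : mon (fun j => r j - mon (cst p.-1) (cst 0) (Yv j))%N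
          (fun j => mon (cst p.-1) (cst 0) (Yv j)) = mon r (cst 0).
        by apply: mon_ext => j; rewrite monY ?subn0.
      have e2 : m = mon (fun j => r j - p.-1)%N (cst p.-1).
        rewrite [LHS]mon_eta; apply: mon_ext => j;
        have := hm j; have := eqP (forallP hall j); rewrite /cst; lia.
      rewrite e1 e2 scaleN1r.
      have e : forall a b c : Pol, b - (- (a - b + c) + (a + c)) = 0.
        by move=> *; ring.
      by rewrite e; apply: ideal0.
    * exists 0, 'X_[mon (fun j => p.-1 - m (Yv j))%N (fun j => m (Yv j))].
      split.
        by apply: mhX => j; rewrite monX monY subnK.
      rewrite iotap1X iota_monE.
      have -> : allY (mon (fun j => p.-1 - m (Yv j))%N (fun j => m (Yv j))) = allY m.
        by apply: eq_forallb => j; rewrite monY.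
      rewrite (negbTE hall).
      have -> : mon (fun j => r j - mon (fun j => p.-1 - m (Yv j))%N
          (fun j => m (Yv j)) (Yv j))%N
          (fun j => mon (fun j => p.-1 - m (Yv j))%N (fun j => m (Yv j)) (Yv j)) = m.
        rewrite [RHS]mon_eta; apply: mon_ext => j; rewrite monY //.
        by have := hm j; lia.
      by rewrite scale0r add0r subrr; apply: ideal0.
  + have big' : (p <= m (Yv j1))%N by rewrite leqNgt.
    have big_all : forall k, (p <= m (Yv (jkf j1 k)))%N.
      elim=> [|k ihk].
        have -> : jkf j1 0%N = j1 by apply: val_inj; rewrite jkf_val addn0 modn_small.
        exact: big'.
      have := none (jkf j1 k.+1); rewrite /= jkf_step ihk andbT => /negbT.
      rewrite lt0n negbK => /eqP hx0.
      by have := hm (jkf j1 k.+1); rewrite hx0 add0n => ->; apply: p_le_r.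
    have allX : forall j, m (Xv j) = 0%N.
      move=> j; have := none j; rewrite /=.
      rewrite (jkf_all j1 (prevj j)) big_all andbT => /negbT.
      by rewrite lt0n negbK => /eqP.
    exists 0, 'X_[mon (cst 0) (cst p.-1)]; split.
      by apply: mhX => j; rewrite monX monY.
    rewrite iotap1X iota_monE.
    have -> : allY (mon (cst 0) (cst p.-1)) by apply/forallP => j; rewrite monY.
    have -> : mon (cst 0) r = m.
      rewrite [RHS]mon_eta; apply: mon_ext => j; rewrite ?allX //.
      by have := hm j; rewrite allX.
    by rewrite scale0r add0r subrr; apply: ideal0.
Qed.

Lemma surj (w : Pol) : mh r w -> Span w.
Proof.
move=> hw; rewrite (mpolyE w); elim: (msupp w) (fun m h => hw m h) => [|m s ihs] h.
  by rewrite big_nil; apply: span0.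
rewrite big_cons; apply: spanD; last by apply: ihs => m' hm'; apply: h; rewrite inE hm' orbT.
apply: spanZ; apply: spanX => j; apply: h; exact: mem_head.
Qed.

End Main.
Require Import Defs.
From HB Require Import structures.
From mathcomp Require Import all_boot all_order all_algebra all_field.
From mathcomp Require Import mpoly zify.
Import GRing.Theory.
Local Open Scope ring_scope.
Set Implicit Arguments.
Unset Strict Implicit.
Unset Printing Implicit Defensive.

Section Indep.
Variables (F : closedFieldType) (p f : nat).
Hypothesis pr : prime p.
Hypothesis chp : p \in [pchar F].
Hypothesis fpos : (0 < f)%N.
Local Notation Pol := {mpoly F[f + f]}.
Local Notation mh := (@multihomog F f).
Local Notation q := (p ^ f)%N.

Lemma fq_roots : exists rs : seq F,
  [/\ uniq rs, size rs = q & forall z, z \in rs -> z ^+ q = z].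
Proof.
have q1 := q_gt1 pr fpos.
set h : {poly F} := 'X^q - 'X.
have sh : size h = q.+1.
  by rewrite /h size_addl ?size_polyXn // size_opp size_polyX.
have lh : lead_coef h = 1.
  by rewrite /h lead_coefDl ?lead_coefXn // size_opp size_polyX size_polyXn.
have [rs hrs] := closed_field_poly_normal h.
rewrite lh scale1r in hrs.
exists rs; split.
- rewrite -separable_prod_XsubC -hrs unlock.
  have -> : h^`() = -1.
    rewrite /h derivB derivXn derivX.
    have -> : ('X^(q.-1) *+ q : {poly F}) = 0.
      rewrite -mulr_natr natrX.
      have chp' : p \in [pchar {poly F}] by rewrite pchar_poly.
      by rewrite (pcharf0 chp') expr0n; case: (f) fpos => // k _; rewrite mulr0.
    by rewrite sub0r.
  by rewrite -scaleN1r coprimepZr ?oppr_eq0 ?oner_eq0 // coprimep1.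
- by have := size_prod_XsubC rs (fun z => z); rewrite -hrs sh => -[].
- move=> z hz; have : root h z by rewrite hrs root_prod_XsubC.
  by rewrite /root /h hornerD hornerN hornerXn hornerX subr_eq0 => /eqP.
Qed.


Definition Kd (m : 'X_{1..f + f}) := (\sum_(j < f) m (Yv j) * p ^ j)%N.
Definition Ad (m : 'X_{1..f + f}) := (\sum_(j < f) m (Xv j) * p ^ j)%N.

Lemma AK (m : 'X_{1..f + f}) : (forall j, (m (Xv j) + m (Yv j))%N = p.-1) ->
  (Ad m + Kd m)%N = q.-1.
Proof.
move=> hm; rewrite /Ad /Kd -big_split -(sum_pm1 f (ltnW (prime_gt1 pr))).
by apply: eq_bigr => j _; rewrite /= -mulnDl hm.
Qed.

Lemma K_inj (m1 m2 : 'X_{1..f + f}) :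
  (forall j, (m1 (Xv j) + m1 (Yv j))%N = p.-1) ->
  (forall j, (m2 (Xv j) + m2 (Yv j))%N = p.-1) ->
  Kd m1 = Kd m2 -> m1 = m2.
Proof.
move=> h1 h2 hK.
pose j0 : 'I_f := Ordinal fpos.
have p1 := prime_gt1 pr.
have lt : forall (m : 'X_{1..f + f}), (forall j, (m (Xv j) + m (Yv j))%N = p.-1) ->
    forall k, (m (Yv (insubd j0 k)) < p)%N.
  move=> m hm k; have := hm (insubd j0 k); lia.
have eK : forall m : 'X_{1..f + f}, Kd m =
    (\sum_(j < f) (fun k => m (Yv (insubd j0 k))) j * p ^ j)%N.
  by move=> m; apply: eq_bigr => j _; rewrite valKd.
have H := digits_inj (fun j _ => lt m1 h1 j) (fun j _ => lt m2 h2 j)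
  (etrans (esym (eK m1)) (etrans hK (eK m2))).
have eY : forall j, m1 (Yv j) = m2 (Yv j).
  by move=> j; have := H j (ltn_ord j); rewrite valKd.
apply/mnmP => i; rewrite -[i]splitK; case: (split i) => j /=.
  change (m1 (Xv j) = m2 (Xv j)).
  by have := h1 j; have := h2 j; rewrite eY; lia.
exact: (eY j).
Qed.

Lemma ev_expand x y (P : Pol) :
  ev p x y P = \sum_(m <- msupp P) P@_m * (x ^+ Ad m * y ^+ Kd m).
Proof.
rewrite {1}(mpolyE P) /ev raddf_sum /=; apply: eq_bigr => m _.
by rewrite mevalZ -/(ev p x y _) ev_X.
Qed.

Lemma indep (c : F) (P : Pol) : mh (cst p.-1) P ->
  (forall x y : F, x ^+ q = x -> y ^+ q = y -> c * E p f x y + ev p x y P = 0) ->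
  c = 0 /\ P = 0.
Proof.
move=> hP H.
have hm : forall m, m \in msupp P -> forall j, (m (Xv j) + m (Yv j))%N = p.-1.
  by move=> m hm j; rewrite (hP m hm j).
have q1 := q_gt1 pr fpos.
pose Qp : {poly F} := c%:P + \sum_(m <- msupp P) P@_m *: 'X^(Kd m).
have cQ : forall i, Qp`_i = c * (i == 0)%:R + \sum_(m <- msupp P) P@_m * (Kd m == i)%:R.
  move=> i; rewrite coefD coefC coef_sum; congr (_ + _).
    by case: (i == 0%N); rewrite ?mulr1 ?mulr0.
  by apply: eq_bigr => m _; rewrite coefZ coefXn eq_sym.
have Q0 : Qp = 0.
  apply/eqP; apply: contraT => nz.
  have [rs [urs srs hrs]] := fq_roots.
  have : (size rs < size Qp)%N.
    apply: max_poly_roots => //; apply/allP => z hz.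
    rewrite /root /Qp hornerD hornerC horner_sum.
    have := H 1 z (expr1n _ _) (hrs z hz).
    rewrite /E ev_expand expr1n mul1r subrK mulr1 => e; apply/eqP; rewrite -[X in _ = X]e.
    by congr (_ + _); apply: eq_bigr => m _; rewrite hornerZ hornerXn expr1n mul1r.
  rewrite srs => hlt; suff : (size Qp <= q)%N by rewrite leqNgt hlt.
  apply/leq_sizeP => i hi.
  rewrite cQ big1_seq ?addr0.
    rewrite (_ : i == 0%N = false) ?mulr0 //; apply/negbTE; move: hi q1; lia.
  move=> m hms; rewrite (_ : Kd m == i = false) ?mulr0 //.
  apply/negbTE; rewrite neq_ltn; apply/orP; left.
  have := AK (hm m hms); move: hi q1; lia.
have coefm : forall m0, m0 \in msupp P -> c * (Kd m0 == 0)%N%:R + P@_m0 = 0.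
  move=> m0 h0; have := cQ (Kd m0); rewrite Q0 coef0 => /esym.
  rewrite (bigD1_seq m0) ?msupp_uniq //= eqxx mulr1 big_seq_cond big1 ?addr0 // => m /andP [hms hne].
  rewrite (_ : Kd m == Kd m0 = false) ?mulr0 //; apply/negbTE.
  by apply: contra hne => /eqP e; apply/eqP; apply: K_inj => //; apply: hm.
have Kz : forall m, m \in msupp P -> Kd m = 0%N.
  move=> m hms; apply/eqP; apply: contraT => nz.
  have := coefm m hms; rewrite (negbTE nz) mulr0 add0r => /eqP.
  by rewrite mcoeff_eq0 hms.
have c0 : c = 0.
  have z0 : (0 : F) ^+ q = 0.
    by rewrite expr0n (negbTE (lt0n_neq0 (ltnW q1))).
  have := H 0 1 z0 (expr1n _ _).
  rewrite /E ev_expand big1_seq; last first.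
    move=> m hms; rewrite expr0n.
    have := AK (hm m hms); rewrite Kz // addn0 => ->.
    by rewrite (_ : q.-1 == 0%N = false) ?mul0r ?mulr0 //; apply/negbTE; rewrite -lt0n -ltnS prednK // ltnW.
  rewrite expr0n (_ : q.-1 == 0%N = false) /=; last by apply/negbTE; rewrite -lt0n -ltnS prednK // ltnW.
  by rewrite mul0r subr0 add0r expr1n mulr1 addr0.
split => //; apply: msuppnil0.
case e : (msupp P) => [|m s] //.
have hms : m \in msupp P by rewrite e mem_head.
have := coefm m hms; rewrite c0 mul0r add0r => /eqP.
by rewrite mcoeff_eq0 hms.
Qed.

End Indep.
Require Import Defs.
From HB Require Import structures.
From mathcomp Require Import all_boot all_order all_algebra all_field.
From mathcomp Require Import mpoly zify ring.
Import GRing.Theory.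
Local Open Scope ring_scope.
Set Implicit Arguments.
Unset Strict Implicit.
Unset Printing Implicit Defensive.

Lemma gl_inj (F : fieldType) (g : 'M[F]_2) (x y : F) : g \in unitmx ->
  g 0 0 * x + g 1 0 * y = 0 -> g 0 1 * x + g 1 1 * y = 0 -> x = 0 /\ y = 0.
Proof.
move=> gu h1 h2.
pose u : 'rV[F]_2 := \row_(i < 2) (if i == 0 then x else y).
have e1 : lift ord0 ord0 = 1 :> 'I_2 by apply: val_inj.
have ug : u *m g = 0.
  apply/rowP => j; rewrite !mxE !big_ord_recl big_ord0 addr0 !mxE /= e1.
  have [->|] := eqVneq j 0; first by rewrite mulrC [y * _]mulrC; exact: h1.
  move=> nj; have -> : j = 1.
    by apply: val_inj; move: nj; case: j => [[|[|]]] //= hj; rewrite -val_eqE.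
  by rewrite mulrC [y * _]mulrC; exact: h2.
have : u = 0 by rewrite -(mulmxK gu u) ug mul0mx.
move=> /rowP H; split.
  by have := H 0; rewrite !mxE.
by have := H 1; rewrite !mxE.
Qed.

Section Final.
Variables (F : closedFieldType) (p f : nat) (r : 'I_f -> nat).
Hypothesis pr : prime p.
Hypothesis chp : p \in [pchar F].
Hypothesis fpos : (0 < f)%N.
Hypothesis hr : forall j, (p ^ f <= r j)%N.
Hypothesis hdiv : (p ^ f - 1 %| \sum_(j < f) r j * p ^ j)%N.
Local Notation Pol := {mpoly F[f + f]}.
Local Notation mh := (@multihomog F f).
Local Notation q := (p ^ f)%N.
Local Notation I := (@in_theta_ideal F f p).

Lemma kernel (D : Pol) : mh r D ->
  (forall x y : F, x ^+ q = x -> y ^+ q = y -> ev p x y D = 0) -> I D.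
Proof.
move=> hD hev.
have [c [P [hP hI]]] := surj pr fpos hr hdiv hD.
have [c0 P0] : c = 0 /\ P = 0.
  apply: (indep pr chp fpos hP) => x y hx hy.
  have := ev_ideal fpos hx hy hI.
  rewrite /ev raddfB raddfD /= mevalZ -!/(ev p x y _) hev //.
  rewrite (ev_iota0 pr fpos hr hdiv hx hy) (ev_iotap1 pr fpos hr hdiv hx hy hP).
  by move/eqP; rewrite sub0r oppr_eq0 => /eqP.
by move: hI; rewrite c0 P0 scale0r iotap1_0 add0r subr0.
Qed.

Lemma Eind (x y : F) : x ^+ q = x -> y ^+ q = y ->
  E p f x y = ((x != 0) || (y != 0))%:R.
Proof.
move=> hx hy; rewrite /E !(fq01 pr fpos) //.
by case: (x != 0); case: (y != 0); rewrite /= ?mulr1n ?mulr0n; ring.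
Qed.

Lemma fq_lin (a b x y : F) : a ^+ q = a -> b ^+ q = b -> x ^+ q = x -> y ^+ q = y ->
  (a * x + b * y) ^+ q = a * x + b * y.
Proof.
by move=> ha hb hx hy; rewrite (frobD pr chp) !exprMn ha hb hx hy.
Qed.

End Final.

Theorem proposition1 (p f : nat) (F : closedFieldType) (r : 'I_f -> nat) :
  prime p -> p \in [pchar F] -> (2 <= f)%N ->
  (forall j : 'I_f, p ^ f <= r j)%N ->
  (p ^ f - 1 %| \sum_(j < f) r j * p ^ j)%N ->
  [/\
    multihomog r (iota0 F p r) /\
    (forall P : {mpoly F[f + f]}, multihomog (fun _ => p.-1) P ->
       multihomog r (iotap1 p r P)),
    (forall g : 'M[F]_2, inGL2Fq (p ^ f) g ->
       in_theta_ideal p (glact p g (iota0 F p r) - iota0 F p r)),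
    (forall (g : 'M[F]_2) (P : {mpoly F[f + f]}), inGL2Fq (p ^ f) g ->
       multihomog (fun _ => p.-1) P ->
       in_theta_ideal p (glact p g (iotap1 p r P) - iotap1 p r (glact p g P))),
    (forall (c : F) (P : {mpoly F[f + f]}), multihomog (fun _ => p.-1) P ->
       in_theta_ideal p (c *: iota0 F p r + iotap1 p r P) -> c = 0 /\ P = 0)
  & (forall w : {mpoly F[f + f]}, multihomog r w ->
       exists (c : F) (P : {mpoly F[f + f]}), multihomog (fun _ => p.-1) P /\
         in_theta_ideal p (w - (c *: iota0 F p r + iotap1 p r P)))].
Proof.
move=> pr chp f2 hr hdiv.
have fpos : (0 < f)%N := ltnW f2.
have hmP : forall P : {mpoly F[f + f]}, multihomog (fun _ => p.-1) P ->
    multihomog r (iotap1 p r P).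
  by move=> P hP; exact: (mh_iotap1 pr fpos hr hP).
have hi0 : multihomog r (iota0 F p r) := mh_iota0 pr fpos hr.
have GL : forall g : 'M[F]_2, inGL2Fq (p ^ f) g ->
    (forall i j, g i j ^+ (p ^ f) = g i j) /\ g \in unitmx.
  move=> g /andP [/forallP gq gu]; split => // i j.
  by apply/eqP; exact: (forallP (gq i) j).
split.
- by split.
- move=> g /GL [gE gu]; apply: (kernel pr chp fpos hr hdiv).
    by apply: mhB => //; apply: mh_glact.
  move=> x y hx hy.
  rewrite /ev raddfB /= -!/(ev p x y _) (ev_glact pr chp).
  have hx' := fq_lin pr chp (gE 0 0) (gE 1 0) hx hy.
  have hy' := fq_lin pr chp (gE 0 1) (gE 1 1) hx hy.
  rewrite (ev_iota0 pr fpos hr hdiv hx' hy') (ev_iota0 pr fpos hr hdiv hx hy).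
  rewrite (Eind pr fpos hx' hy') (Eind pr fpos hx hy).
  have -> : ((g 0 0 * x + g 1 0 * y != 0) || (g 0 1 * x + g 1 1 * y != 0))
      = ((x != 0) || (y != 0)); last by rewrite subrr.
  apply/idP/idP; apply: contraLR; rewrite !negb_or !negbK.
    by move=> /andP [/eqP -> /eqP ->]; rewrite !mulr0 addr0 eqxx.
  by move=> /andP [/eqP h1 /eqP h2]; have [-> ->] := gl_inj gu h1 h2; rewrite eqxx.
- move=> g P /GL [gE gu] hP; apply: (kernel pr chp fpos hr hdiv).
    apply: mhB; first by apply: mh_glact; apply: hmP.
    by apply: hmP; apply: mh_glact.
  move=> x y hx hy.
  rewrite /ev raddfB /= -!/(ev p x y _) (ev_glact pr chp).
  have hx' := fq_lin pr chp (gE 0 0) (gE 1 0) hx hy.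
  have hy' := fq_lin pr chp (gE 0 1) (gE 1 1) hx hy.
  rewrite (ev_iotap1 pr fpos hr hdiv hx' hy' hP).
  rewrite (ev_iotap1 pr fpos hr hdiv hx hy (@mh_glact F f p _ g P hP)) (ev_glact pr chp).
  by rewrite subrr.
- move=> c P hP hI; apply: (indep pr chp fpos hP) => x y hx hy.
  have := ev_ideal fpos hx hy hI.
  rewrite /ev raddfD /= mevalZ -!/(ev p x y _).
  by rewrite (ev_iota0 pr fpos hr hdiv hx hy) (ev_iotap1 pr fpos hr hdiv hx hy hP).
- by move=> w hw; exact: (surj pr fpos hr hdiv hw).
Qed.
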